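(* Let $\mathcal M$ be an $\aleph_1$-saturated structure. Then $\mathcal M$ is unstable if and only if $\mathcal M$ trace defines $(\mathbb Q,<)$, and $\mathcal M$ has the independence property (IP, i.e. is not NIP) if and only if $\mathcal M$ trace defines the random graph.
   Context: The random graph is the Fraïssé limit of the class of finite symmetric irreflexive graphs, viewed as a structure $(V,E)$ with one binary relation. ''Definable'' means definable with parameters. For structures $\mathcal M,\mathcal O$ and an injection $\tau:O\to M^m$, $\mathcal M$ trace defines $\mathcal O$ via $\tau$ if for every $n$ and every $\mathcal O$-definable $X\subseteq O^n$ there is an $\mathcal M$-definable $Y\subseteq M^{mn}$ with $X=\{(a_1,\dots,a_n)\in O^n:(\tau(a_1),\dots,\tau(a_n))\in Y\}$; $\mathcal M$ trace defines $\mathcal O$ if it does so via some injection $\tau:O\to M^m$ for some $m$. *)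

(* Defs.v *)
From Stdlib Require List.
From mathcomp Require Import all_boot all_order all_algebra.
Set Implicit Arguments. Unset Strict Implicit. Unset Printing Implicit Defensive.
Import Order.TTheory GRing.Theory Num.Theory.

(* A first-order signature: relation and function symbols with arities
   (constants are 0-ary function symbols). *)
Record signature := Signature {
  rsym : Type; rar : rsym -> nat;
  fsym : Type; far : fsym -> nat }.

Record structure (L : signature) := Structure {
  carrier :> Type;
  rinterp : forall r : rsym L, ('I_(rar r) -> carrier) -> Prop;
  finterp : forall f : fsym L, ('I_(far f) -> carrier) -> carrier }.

Inductive term (L : signature) : Type :=
| tvar : nat -> term L
| tapp : forall f : fsym L, ('I_(far f) -> term L) -> term L.

Inductive formula (L : signature) : Type :=
| feq : term L -> term L -> formula L
| frel : forall r : rsym L, ('I_(rar r) -> term L) -> formula L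
| fneg : formula L -> formula L
| fand : formula L -> formula L -> formula L
| fex : nat -> formula L -> formula L.

Section Semantics.
Variables (L : signature) (M : structure L).

Fixpoint teval (v : nat -> M) (t : term L) : M :=
  match t with
  | tvar n => v n
  | tapp f ts => @finterp L M f (fun i => teval v (ts i))
  end.

Definition upd (v : nat -> M) (n : nat) (c : M) : nat -> M :=
  fun k => if k == n then c else v k.

Fixpoint sat (v : nat -> M) (phi : formula L) : Prop :=
  match phi with
  | feq t1 t2 => teval v t1 = teval v t2
  | frel r ts => @rinterp L M r (fun i => teval v (ts i))
  | fneg p => ~ sat v p
  | fand p q => sat v p /\ sat v q
  | fex n p => exists c : M, sat (upd v n c) p
  end.

Definition tval (n : nat) (a : 'I_n -> M) (v : nat -> M) : nat -> M :=
  fun k => match (insub k : option 'I_n) with Some i => a i | None => v k end.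

(* variables 0..p-1 <- x, p..p+q-1 <- y, others <- v *)
Definition pval (p q : nat) (x : 'I_p -> M) (y : 'I_q -> M) (v : nat -> M)
  : nat -> M :=
  tval x (fun k => tval y (fun l => v (l + p)) (k - p)).

(* X, a set of I-indexed tuples (I a finite index type, i.e. M^|I|), is
   definable with parameters: the coordinates are named by the variables
   0..|I|-1 (via the enumeration of I), all other free variables of the
   formula are parameters from M. *)
Definition DefinableI (I : finType) (X : (I -> M) -> Prop) : Prop :=
  exists (phi : formula L) (v : nat -> M),
    forall a : I -> M,
      X a <-> sat (tval (fun i : 'I_#|I| => a (enum_val i)) v) phi.

(* aleph_1-saturation: every finitely satisfiable set of formulas in the
   free variable 0 with parameters from a countable set {b_k} (variable
   k.+1 is interpreted by b k) is realized. *)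
Definition pv (b : nat -> M) (c : M) : nat -> M :=
  fun k => match k with 0 => c | k'.+1 => b k' end.

Definition aleph1_saturated : Prop :=
  forall (b : nat -> M) (P : formula L -> Prop),
    (forall s : list (formula L), (forall phi, List.In phi s -> P phi) ->
       exists c : M, forall phi, List.In phi s -> sat (pv b c) phi) ->
    exists c : M, forall phi, P phi -> sat (pv b c) phi.

(* Th(M) is unstable: some formula phi(x;y) has the order property,
   i.e. for every N there are a_0..a_{N-1}, b_0..b_{N-1} with
   phi(a_i,b_j) <-> i < j.  (The remaining free variables of phi are
   existentially assigned, which amounts to enlarging the tuple y.) *)
Definition unstable : Prop :=
  exists (phi : formula L) (p q : nat),
    forall N : nat, exists (v : nat -> M) (a : 'I_N -> 'I_p -> M)
                           (b : 'I_N -> 'I_q -> M),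
      forall i j : 'I_N, sat (pval (a i) (b j) v) phi <-> (i < j)%N.

Definition has_IP : Prop :=
  exists (phi : formula L) (p q : nat),
    forall N : nat, exists (v : nat -> M) (a : 'I_N -> 'I_p -> M)
                           (b : {set 'I_N} -> 'I_q -> M),
      forall (i : 'I_N) (S : {set 'I_N}), sat (pval (a i) (b S) v) phi <-> i \in S.

End Semantics.

Definition trace_defines_via (L L' : signature) (M : structure L)
  (O : structure L') (m : nat) (tau : O -> 'I_m -> M) : Prop :=
  (forall a b : O, (forall j, tau a j = tau b j) -> a = b) /\
  forall (n : nat) (X : ('I_n -> O) -> Prop),
    @DefinableI L' O _ X ->
    exists Y : ('I_n * 'I_m -> M) -> Prop,
      @DefinableI L M _ Y /\
      forall a : 'I_n -> O, X a <-> Y (fun p => tau (a p.1) p.2).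

Definition trace_defines (L L' : signature) (M : structure L)
  (O : structure L') : Prop :=
  exists (m : nat) (tau : O -> 'I_m -> M), @trace_defines_via L L' M O m tau.

Definition binsig : signature :=
  @Signature unit (fun _ => 2%N) void (fun f => match f with end).

Definition QLt : structure binsig :=
  @Structure binsig rat (fun _ a => (a ord0 < a ord_max)%R)
    (fun f => match f with end).

(* The random (Rado) graph on nat: x ~ y iff x <> y and the x-th binary
   digit of y or the y-th binary digit of x is 1. *)
Definition rado_edge (x y : nat) : Prop :=
  x <> y /\ (Nat.testbit y x = true \/ Nat.testbit x y = true).

Definition RandomGraph : structure binsig :=
  @Structure binsig nat (fun _ a => rado_edge (a ord0) (a ord_max))
    (fun f => match f with end).

(* Main.v *)
Require Import Defs.
From mathcomp Require Import all_boot all_order all_algebra zify lra.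
From Stdlib Require Import PeanoNat ClassicalEpsilon FunctionalExtensionality Classical.
Set Implicit Arguments. Unset Strict Implicit. Unset Printing Implicit Defensive.
Import Order.TTheory GRing.Theory Num.Theory.

Section Syntax.
Variable L : signature.

Fixpoint tbnd (t : term L) : nat :=
  match t with
  | tvar n => n.+1
  | tapp f ts => \max_(i < far f) tbnd (ts i)
  end.

Fixpoint bnd (phi : formula L) : nat :=
  match phi with
  | feq t1 t2 => maxn (tbnd t1) (tbnd t2)
  | Defs.frel r ts => \max_(i < rar r) tbnd (ts i)
  | fneg p => bnd p
  | fand p q => maxn (bnd p) (bnd q)
  | fex n p => maxn n.+1 (bnd p)
  end.

Fixpoint tsubst (s : nat -> nat) (t : term L) : term L :=
  match t with
  | tvar n => tvar L (s n)
  | tapp f ts => tapp (fun i => tsubst s (ts i))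
  end.

Fixpoint subst (s : nat -> nat) (phi : formula L) : formula L :=
  match phi with
  | feq t1 t2 => feq (tsubst s t1) (tsubst s t2)
  | Defs.frel r ts => Defs.frel (fun i => tsubst s (ts i))
  | fneg p => fneg (subst s p)
  | fand p q => fand (subst s p) (subst s q)
  | fex n p => let N := (\max_(k < bnd p) s k).+1 in
               fex N (subst (fun k => if k == n then N else s k) p)
  end.

Definition ftrue : formula L := feq (tvar L 0) (tvar L 0).
Definition for_ (p q : formula L) := fneg (fand (fneg p) (fneg q)).
Definition fimp (p q : formula L) := fneg (fand p (fneg q)).
Definition fiff (p q : formula L) := fand (fimp p q) (fimp q p).
Definition bigand (l : list (formula L)) := List.fold_right (@fand L) ftrue l.
Definition bigandf (I : Type) (s : seq I) (F : I -> formula L) :=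
  foldr (fun i acc => fand (F i) acc) ftrue s.
Definition bigorf (I : Type) (s : seq I) (F : I -> formula L) :=
  foldr (fun i acc => for_ (F i) acc) (fneg ftrue) s.
Definition fexs (xs : list nat) (phi : formula L) := List.fold_right (@fex L) phi xs.

Variable M : structure L.

Lemma teval_ext (t : term L) (v w : nat -> M) :
  (forall k, k < tbnd t -> v k = w k) -> teval v t = teval w t.
Proof.
elim: t => [n|f ts IH] /= H; first by apply: H.
congr finterp; apply: functional_extensionality => i; apply: IH => k Hk.
apply: H; apply: leq_trans Hk _; exact: (leq_bigmax i).
Qed.

Lemma sat_ext (phi : formula L) (v w : nat -> M) :
  (forall k, k < bnd phi -> v k = w k) -> (sat v phi <-> sat w phi).
Proof.
elim: phi v w => [t1 t2|r ts|p IH|p IHp q IHq|n p IH] v w /= H.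
- rewrite (@teval_ext t1 v w) ?(@teval_ext t2 v w) //.
    by move=> k Hk; apply: H; rewrite leq_max Hk orbT.
  by move=> k Hk; apply: H; rewrite leq_max Hk.
- have -> : (fun i => teval v (ts i)) = (fun i => teval w (ts i)) => //.
  apply: functional_extensionality => i; apply: teval_ext => k Hk.
  apply: H; apply: leq_trans Hk _; exact: (leq_bigmax i).
- by rewrite (IH v w).
- rewrite (IHp v w) ?(IHq v w) //.
    by move=> k Hk; apply: H; rewrite leq_max Hk orbT.
  by move=> k Hk; apply: H; rewrite leq_max Hk.
- split=> [[c Hc]|[c Hc]]; exists c.
    rewrite -(IH (upd v n c)) // => k Hk; rewrite /upd; case: eqP => // _.
    by apply: H; rewrite leq_max Hk orbT.
  rewrite (IH _ (upd w n c)) // => k Hk; rewrite /upd; case: eqP => // _.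
  by apply: H; rewrite leq_max Hk orbT.
Qed.

Lemma sat_ext_imp (phi : formula L) (v w : nat -> M) :
  (forall k, k < bnd phi -> v k = w k) -> sat v phi -> sat w phi.
Proof. by move=> H; case: (sat_ext H). Qed.

Lemma teval_subst (t : term L) (s : nat -> nat) (v : nat -> M) :
  teval v (tsubst s t) = teval (v \o s) t.
Proof.
elim: t => [n|f ts IH] //=; congr finterp; apply: functional_extensionality => i.
exact: IH.
Qed.

Lemma sat_subst (phi : formula L) (s : nat -> nat) (v : nat -> M) :
  sat v (subst s phi) <-> sat (v \o s) phi.
Proof.
elim: phi s v => [t1 t2|r ts|p IH|p IHp q IHq|n p IH] s v /=.
- by rewrite !teval_subst.
- have -> : (fun i => teval v (tsubst s (ts i))) = (fun i => teval (v \o s) (ts i)) => //.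
  by apply: functional_extensionality => i; rewrite teval_subst.
- by rewrite IH.
- by rewrite IHp IHq.
- set N := (\max_(k < bnd p) s k).+1.
  split=> [[c Hc]|[c Hc]]; exists c.
    move: Hc; rewrite IH; apply: sat_ext_imp => k Hk /=; rewrite /upd.
        case: (k =P n) => [_|/eqP kn]; first by rewrite eqxx.
    case: eqP => // E; exfalso.
    have : s k < N by rewrite ltnS; exact: (leq_bigmax (Ordinal Hk)).
    by rewrite E ltnn.
  rewrite IH; move: Hc; apply: sat_ext_imp => k Hk /=; rewrite /upd.
  case: (k =P n) => [_|/eqP kn]; first by rewrite eqxx.
  case: eqP => // E; exfalso.
  have : s k < N by rewrite ltnS; exact: (leq_bigmax (Ordinal Hk)).
  by rewrite E ltnn.
Qed.

Lemma sat_true (v : nat -> M) : sat v ftrue.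
Proof. by []. Qed.

Lemma sat_or (v : nat -> M) p q : sat v (for_ p q) <-> sat v p \/ sat v q.
Proof. rewrite /=; tauto. Qed.

Lemma sat_iff (v : nat -> M) p q : sat v (fiff p q) <-> (sat v p <-> sat v q).
Proof. rewrite /=; tauto. Qed.

Lemma sat_bigand (v : nat -> M) l :
  sat v (bigand l) <-> forall phi, List.In phi l -> sat v phi.
Proof.
elim: l => [|a l IH] /=; first by split=> // _ phi [].
rewrite IH; split=> [[Ha Hl] phi [<-|]|H]; [by []|by apply: Hl|].
by split; [apply: H; left|move=> phi Hp; apply: H; right].
Qed.

Lemma sat_bigandf (I : eqType) (v : nat -> M) (s : seq I) F :
  sat v (bigandf s F) <-> forall i, i \in s -> sat v (F i).
Proof.
elim: s => [|a s IH] /=; first by split.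
rewrite IH; split=> [[Ha Hl] i|H].
  by rewrite in_cons => /orP[/eqP->|/Hl].
by split; [apply: H; rewrite mem_head|move=> i Hi; apply: H; rewrite in_cons Hi orbT].
Qed.

Lemma sat_bigorf (I : eqType) (v : nat -> M) (s : seq I) F :
  sat v (bigorf s F) <-> exists2 i, i \in s & sat v (F i).
Proof.
elim: s => [|a s IH]; first by split=> [/= []//|[]].
rewrite /= -/(bigorf s F).
have E : (~ (~ sat v (F a) /\ ~ sat v (bigorf s F))) <-> (sat v (F a) \/ sat v (bigorf s F)) by tauto.
rewrite E IH; split=> [[H|[i Hi H]]|[i]].
- by exists a; rewrite ?mem_head.
- by exists i; rewrite // in_cons Hi orbT.
- by rewrite in_cons => /orP[/eqP->|Hi H]; [left|right; exists i].
Qed.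

Lemma sat_fexs (v : nat -> M) xs phi :
  sat v (fexs xs phi) <-> exists u, (forall t, ~ List.In t xs -> u t = v t) /\ sat u phi.
Proof.
elim: xs v => [|n xs IH] v /=.
  split=> [H|[u [Hu H]]]; first by exists v.
  by move: H; apply: sat_ext_imp => k _; apply: Hu.
split=> [[c /IH [u [Hu H]]]|[u [Hu H]]].
  exists u; split=> // t Ht; rewrite Hu; last tauto.
  by rewrite /upd; case: eqP => // E; exfalso; apply: Ht; left.
exists (u n); apply/IH; exists u; split=> // t Ht; rewrite /upd.
case: eqP => [->//|ne]; apply: Hu; case=> //; move=> E; apply: ne; by rewrite E.
Qed.

End Syntax.

Lemma In_mem (T : eqType) (x : T) (s : seq T) : List.In x s <-> x \in s.
Proof.
elim: s => [|a s IH] //=; rewrite in_cons IH; split.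
  by case=> [->|->]; rewrite ?eqxx ?orbT.
by case/orP=> [/eqP->|]; [left|right].
Qed.

Section Realize.
Variables (L : signature) (M : structure L).
Hypothesis Hsat : aleph1_saturated M.

Definition sk (k t : nat) := if t == k then 0 else t.+1.

Definition theta (k : nat) (s : list (formula L)) :=
  subst (sk k) (fexs (iota k.+1 (bnd (bigand s) - k.+1)) (bigand s)).

Lemma thetaP k s (b : nat -> M) c :
  sat (pv b c) (theta k s) <->
  exists u, u k = c /\ (forall i, i < k -> u i = b i) /\ sat u (bigand s).
Proof.
rewrite /theta sat_subst sat_fexs; set B := bnd (bigand s).
have inxs t : List.In t (iota k.+1 (B - k.+1)) <-> k < t < B.
  rewrite In_mem mem_iota.
  suff -> : ((k.+1 <= t) && (t < k.+1 + (B - k.+1))) = (k < t < B) by [].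
  by apply/idP/idP => /andP[h1 h2]; apply/andP; split; lia.
split=> [[u [Hu H]]|[u [Hk [Hb H]]]].
  exists u; split; first by rewrite Hu /= /sk ?eqxx //; rewrite inxs ltnn.
  split=> // i ik; rewrite Hu /= /sk; last by rewrite inxs ltnNge ltnW.
  by rewrite ifN // neq_ltn ik.
exists (fun t => if k < t < B then u t else pv b c (sk k t)); split.
  move=> t; rewrite inxs => /negP /negbTE -> //.
move: H; apply: sat_ext_imp => t tB.
rewrite tB andbT; case: ltnP => // tk /=; rewrite /sk.
case: eqP => [->//|/eqP ne] /=.
by rewrite Hb // ltn_neqAle ne.
Qed.

Variable Sig : formula L -> Prop.

Definition Inv k (f : nat -> M) := forall s : list (formula L),
  (forall phi, List.In phi s -> Sig phi) ->
  exists u : nat -> M, (forall i, i < k -> u i = f i) /\ forall phi, List.In phi s -> sat u phi.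

Lemma collect_k k (ts : list (formula L)) :
  (forall th, List.In th ts -> exists s, (forall phi, List.In phi s -> Sig phi) /\ th = theta k s) ->
  exists S, (forall phi, List.In phi S -> Sig phi) /\
    forall th, List.In th ts -> exists s, th = theta k s /\ forall phi, List.In phi s -> List.In phi S.
Proof.
elim: ts => [|t ts IH] H; first by exists nil; split=> // ? [].
case: (H t (List.in_eq _ _)) => s [Hs Et].
have [S [HS HT]] : exists S, (forall phi, List.In phi S -> Sig phi) /\
    forall th, List.In th ts -> exists s, th = theta k s /\ forall phi, List.In phi s -> List.In phi S.
  by apply: IH => th h; apply: H; right.
exists (s ++ S); split.
  by move=> phi Hp; case: (List.in_app_or _ _ _ Hp) => [/Hs|/HS].
move=> th [<-|/HT [s' [-> Hs']]]; first rewrite Et.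
  by exists s; split=> // phi Hp; apply: List.in_or_app; left.
by exists s'; split=> // phi Hp; apply: List.in_or_app; right; apply: Hs'.
Qed.

Lemma inv_step k f : Inv k f -> exists c, Inv k.+1 (upd f k c).
Proof.
move=> Hk.
pose P th := exists s, (forall phi, List.In phi s -> Sig phi) /\ th = theta k s.
have [c Hc] : exists c, forall th, P th -> sat (pv f c) th.
  apply: Hsat => ts Hts.
  have [S [HS HT]] := collect_k Hts.
  have [u [Hu HuS]] := Hk S HS.
  exists (u k) => th /HT [s [-> Hs]].
  apply/thetaP; exists u; split=> //; split=> //.
  by apply/sat_bigand => phi /Hs /HuS.
exists c => s Hs.
have /thetaP [u [uk [Hb Hsu]]] := Hc (theta k s) (ex_intro _ s (conj Hs erefl)).
exists u; split; last by apply/sat_bigand.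
move=> i; rewrite ltnS leq_eqVlt => /orP [/eqP ->|ik]; first by rewrite /upd eqxx.
by rewrite /upd ifN ?Hb // neq_ltn ik.
Qed.

Lemma realize :
  (forall s : list (formula L), (forall phi, List.In phi s -> Sig phi) ->
     exists u : nat -> M, forall phi, List.In phi s -> sat u phi) ->
  exists w : nat -> M, forall phi, Sig phi -> sat w phi.
Proof.
move=> Hfin.
have [u0 _] := Hfin nil (fun _ h => False_ind _ h).
have inh : inhabited M := inhabits (u0 0).
pose g k f := epsilon inh (fun c => Inv k.+1 (upd f k c)).
pose F := fix F k := if k is k'.+1 then upd (F k') k' (g k' (F k')) else (fun _ => u0 0).
have HF k : Inv k (F k).
  elim: k => [|k IH]; first by move=> s Hs; have [u Hu] := Hfin s Hs; exists u.
  by apply: (epsilon_spec inh (fun c => Inv k.+1 (upd (F k) k c))); apply: inv_step.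
have FF k t : t < k -> F k t = F t.+1 t.
  elim: k => [//|k IH]; rewrite ltnS leq_eqVlt => /orP [/eqP ->//|tk].
  by rewrite /= /upd ifN ?IH // neq_ltn tk.
exists (fun t => F t.+1 t) => phi Hphi.
have [u [Hu Hs]] := HF (bnd phi) [:: phi] (fun p h => match h with or_introl e => eq_ind _ _ Hphi _ e | or_intror f => False_ind _ f end).
move: (Hs phi (or_introl erefl)); apply: sat_ext_imp => t tB.
by rewrite Hu // FF.
Qed.

End Realize.

Section PI.
Variables (O : structure binsig) (Rel : O -> O -> Prop).
Hypothesis HR : forall a : 'I_2 -> O, @rinterp binsig O tt a <-> Rel (a ord0) (a ord_max).

Definition PIso (l : list (O * O)) := forall p p', List.In p l -> List.In p' l ->
  (p.1 = p'.1 <-> p.2 = p'.2) /\ (Rel p.1 p'.1 <-> Rel p.2 p'.2).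

Definition Ext := forall l c, PIso l -> exists d, PIso ((c, d) :: l).

Lemma PIso_dup l p : List.In p l -> PIso l -> PIso (p :: l).
Proof.
move=> Hp H q q' [<-|Hq] [<-|Hq']; by apply: H.
Qed.

Lemma PIso_cons l c d : PIso l ->
  (forall q, List.In q l -> (c = q.1 <-> d = q.2) /\ (Rel c q.1 <-> Rel d q.2)
     /\ (Rel q.1 c <-> Rel q.2 d)) ->
  (Rel c c <-> Rel d d) -> PIso ((c, d) :: l).
Proof.
move=> H Hq Hcc q q' [<-|Hl] [<-|Hl'] /=.
- by [].
- by have [? [? ?]] := Hq q' Hl'.
- have [[E1 E2] [? ?]] := Hq q Hl; split=> //.
  by split=> E; apply/esym; [apply/E1|apply/E2]; apply/esym.
- by apply: H.
Qed.

Definition swapl (l : list (O * O)) := List.map (fun p => (p.2, p.1)) l.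

Lemma In_swapl p l : List.In p (swapl l) <-> List.In (p.2, p.1) l.
Proof.
rewrite /swapl List.in_map_iff; split=> [[q [<- Hq]]|H].
  by case: q Hq.
by exists (p.2, p.1); case: p H.
Qed.

Lemma PIso_swap l : PIso l -> PIso (swapl l).
Proof.
move=> H p p' /In_swapl Hp /In_swapl Hp'.
have [E1 E2] := H _ _ Hp Hp'; split; by apply: iff_sym.
Qed.

Lemma ext_sym : Ext -> forall l d, PIso l -> exists c, PIso ((c, d) :: l).
Proof.
move=> He l d H; have [c Hc] := He (swapl l) d (PIso_swap H).
exists c; have := PIso_swap Hc; rewrite /swapl /= List.map_map /=.
suff -> : List.map (fun x : O * O => (x.1, x.2)) l = l by [].
by elim: (l) => //= [[a b] l' ->].
Qed.

Lemma term_var (t : term binsig) : exists n, t = tvar binsig n.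
Proof. by case: t => [n|[]]; exists n. Qed.

Definition Cond (v w : nat -> O) B := forall k l, k < B -> l < B ->
  (v k = v l <-> w k = w l) /\ (Rel (v k) (v l) <-> Rel (w k) (w l)).

Lemma Cond_le v w B B' : B' <= B -> Cond v w B -> Cond v w B'.
Proof. by move=> le H k l hk hl; apply: H; apply: leq_trans le. Qed.

Lemma pi_sat (He : Ext) phi : forall v w, Cond v w (bnd phi) -> (sat v phi <-> sat w phi).
Proof.
elim: phi => [t1 t2|r ts|p IH|p IHp q IHq|n p IH] v w /= H.
- have [n1 E1] := term_var t1; have [n2 E2] := term_var t2; subst => /=.
  by apply: (proj1 (H n1 n2 _ _)) => /=; rewrite leq_max leqnn ?orbT.
- case: r ts H => ts H; rewrite !HR.
  have [n1 E1] := term_var (ts ord0); have [n2 E2] := term_var (ts ord_max).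
  rewrite E1 E2 /=; apply: (proj2 (H n1 n2 _ _)).
    by apply: leq_trans (leq_bigmax ord0); rewrite E1.
  by apply: leq_trans (leq_bigmax ord_max); rewrite E2.
- by rewrite (IH v w).
- rewrite (IHp v w) ?(IHq v w) //; apply: Cond_le H; by rewrite leq_max leqnn ?orbT.
- set B := maxn n.+1 (bnd p).
  pose l := List.map (fun k => (v k, w k)) (List.seq 0 B).
  have Hl : PIso l.
    move=> q q' /List.in_map_iff [k [<- /List.in_seq Hk]] /List.in_map_iff [k' [<- /List.in_seq Hk']].
    by apply: H; lia.
  have Hin k c d : k < B -> List.In (upd v n c k, upd w n d k) ((c, d) :: l).
    move=> kB; rewrite /upd; case: eqP => _; first by left.
    right; apply/List.in_map_iff; exists k; split=> //; apply/List.in_seq; lia.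
  have Hc c d : PIso ((c, d) :: l) -> Cond (upd v n c) (upd w n d) (bnd p).
    move=> P k k' hk hk'.
    have hB x : x < bnd p -> x < B by move=> hx; rewrite leq_max hx orbT.
    exact: (P _ _ (Hin k c d (hB _ hk)) (Hin k' c d (hB _ hk'))).
  split=> [[c Hs]|[d Hs]].
    have [d Hd] := He l c Hl; exists d; rewrite -(IH (upd v n c)) //; exact: Hc.
  have [c Hd] := ext_sym He d Hl; exists c; rewrite (IH _ (upd w n d)) //; exact: Hc.
Qed.

End PI.

Lemma list_max (s : seq rat) x0 : exists2 x, x \in x0 :: s & forall y, y \in x0 :: s -> (y <= x)%R.
Proof.
elim: s x0 => [|a s IH] x0; first by exists x0 => [|y]; rewrite inE // => /eqP->.
have [x Hx Hm] := IH x0.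
case: (lerP a x) => ax.
  exists x; first by move: Hx; rewrite !inE => /orP[->|->]; rewrite ?orbT.
  by move=> y; rewrite !inE => /orP[/eqP->|/orP[/eqP->//|ys]]; apply: Hm; rewrite !inE ?eqxx ?ys ?orbT.
exists a; first by rewrite !inE eqxx orbT.
move=> y; rewrite !inE => /orP[/eqP->|/orP[/eqP->//|ys]].
  by apply: le_trans (ltW ax); apply: Hm; rewrite inE eqxx.
by apply: le_trans (ltW ax); apply: Hm; rewrite inE ys orbT.
Qed.

Lemma list_min (s : seq rat) x0 : exists2 x, x \in x0 :: s & forall y, y \in x0 :: s -> (x <= y)%R.
Proof.
have [x Hx Hm] := list_max [seq - y | y <- s]%R (- x0)%R.
exists (- x)%R.
  move: Hx; rewrite -(map_cons (fun y => - y)%R) => /mapP [z Hz ->]; by rewrite opprK.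
move=> y Hy; rewrite lerNl; apply: Hm.
by rewrite -(map_cons (fun y => - y)%R); apply: map_f.
Qed.

Lemma between (lo hi : seq rat) : (forall l h, l \in lo -> h \in hi -> (l < h)%R) ->
  exists d, (forall l, l \in lo -> (l < d)%R) /\ (forall h, h \in hi -> (d < h)%R).
Proof.
move=> H.
case: lo H => [|l0 lo] H; case: hi H => [|h0 hi] H.
- by exists 0%R.
- have [m _ Hm] := list_min hi h0; exists (m - 1)%R; split=> // h /Hm.
  by apply: lt_le_trans; rewrite ltrBlDr ltrDl.
- have [m _ Hm] := list_max lo l0; exists (m + 1)%R; split=> // l /Hm.
  by move/le_lt_trans; apply; rewrite ltrDl.
- have [m Hmi Hm] := list_max lo l0; have [m' Hmi' Hm'] := list_min hi h0.
  have mm : (m < m')%R by apply: H.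
  exists ((m + m') / 2)%R; split.
    by move=> l /Hm /le_lt_trans; apply; rewrite ltr_pdivlMr //; lra.
  by move=> h /Hm' /(lt_le_trans _); apply; rewrite ltr_pdivrMr //; lra.
Qed.

Lemma ext_QLt : Ext (O := QLt) (fun x y : rat => (x < y)%R).
Proof.
move=> l c H.
case: (classic (exists p, List.In p l /\ p.1 = c)) => [[p [Hp E]]|Hn].
  case: p Hp E => p1 p2 Hp /= E; subst c.
  by exists p2; apply: PIso_dup.
pose lo := [seq q.2 | q <- l & (q.1 < c)%R]; pose hi := [seq q.2 | q <- l & (c < q.1)%R].
have Hin q : List.In q l -> (q.1 < c)%R -> q.2 \in lo.
  by move=> /In_mem Hq qc; apply: map_f; rewrite mem_filter qc.
have Hin' q : List.In q l -> (c < q.1)%R -> q.2 \in hi.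
  by move=> /In_mem Hq qc; apply: map_f; rewrite mem_filter qc.
have [d [Hlo Hhi]] : exists d, (forall l, l \in lo -> (l < d)%R) /\ (forall h, h \in hi -> (d < h)%R).
  apply: between => x y /mapP [q]; rewrite mem_filter => /andP [qc /In_mem Hq] ->.
  move=> /mapP [q']; rewrite mem_filter => /andP [qc' /In_mem Hq'] ->.
  by apply/(proj2 (H _ _ Hq Hq')); apply: lt_trans qc'.
exists d; apply: PIso_cons => //; last by rewrite !ltxx.
move=> q Hq.
have qc : q.1 != c by apply/eqP => E; apply: Hn; exists q.
case: (ltgtP q.1 c) qc => // qc _.
  have := Hlo _ (Hin q Hq qc) => dq.
  split; first by split=> E; [move: qc; rewrite E ltxx|move: dq; rewrite E ltxx].
  split; last by [].
  by split=> h //; move: (lt_trans h dq); rewrite ltxx.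
have := Hhi _ (Hin' q Hq qc) => dq.
split; first by split=> E; [move: qc; rewrite E ltxx|move: dq; rewrite E ltxx].
split; first by [].
by split=> h //; move: (lt_trans h dq); rewrite ltxx.
Qed.

Fixpoint rf (U : nat -> bool) (K s : nat) : nat :=
  if s is s'.+1 then (if U s' then Nat.setbit (rf U K s') s' else rf U K s') else 2 ^ K.

Lemma eqbE (a b : nat) : (a =? b) = (a == b).
Proof. by case: (Nat.eqb_spec a b) => [->|/eqP /negbTE ->]; rewrite ?eqxx. Qed.

Lemma rf_bits U K s x : s <= K -> Nat.testbit (rf U K s) x = (x == K) || (x < s) && U x.
Proof.
elim: s => [|s IH] sK /=.
  by rewrite Nat.pow2_bits_eqb eqbE eq_sym orbF.
case: ifP => Us.
  rewrite Nat.setbit_eqb IH ?(ltnW sK) // eqbE [x < s.+1]ltnS.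
  case: (ltngtP x s) => h /=; rewrite ?andbF ?orbF //.
  by rewrite h Us orbT.
rewrite IH ?(ltnW sK) // [x < s.+1]ltnS.
case: (ltngtP x s) => h /=; rewrite ?andbF ?orbF //.
by rewrite h Us orbF.
Qed.

Lemma small_bit a n : a < 2 ^ n -> Nat.testbit a n = false.
Proof.
move=> h; case: a h => [|a] h; first exact: Nat.bits_0.
apply: Nat.bits_above_log2; apply/Nat.log2_lt_pow2; first lia.
by apply/ssrnat.ltP.
Qed.

Lemma lt_pow2 n : n < 2 ^ n.
Proof. by apply/ssrnat.ltP; apply: Nat.pow_gt_lin_r. Qed.

Lemma rado_ext K (U : nat -> bool) :
  exists d, K <= d /\ forall x, x < K -> (rado_edge x d <-> U x).
Proof.
pose d := rf U K K.
have dK : Nat.testbit d K = true by rewrite rf_bits // eqxx.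
have Kd : K < d.
  case: (ltnP d (2 ^ K)) => h; first by rewrite small_bit in dK.
  exact: leq_trans (lt_pow2 K) h.
exists d; split; first exact: ltnW.
move=> x xK; rewrite /rado_edge.
have xd : x < d by apply: ltn_trans Kd.
rewrite rf_bits // xK /= (small_bit (ltn_trans xd (lt_pow2 d))).
have -> : (x == K) = false by apply/negbTE; rewrite neq_ltn xK.
split; first by case=> _ [|//].
move=> Ux; split; last by left.
by move=> E; move: xd; rewrite E ltnn.
Qed.

Lemma rado_sym x y : rado_edge x y <-> rado_edge y x.
Proof. rewrite /rado_edge; split; case=> h1 h2; split; by [auto| tauto]. Qed.

Lemma rado_irr x : ~ rado_edge x x.
Proof. by case. Qed.

Definition pb (P : Prop) : bool := if excluded_middle_informative P then true else false.
Lemma pbP (P : Prop) : pb P <-> P.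
Proof. by rewrite /pb; case: excluded_middle_informative. Qed.

Lemma ext_Rado : Ext (O := RandomGraph) rado_edge.
Proof.
move=> l c H.
case: (classic (exists p, List.In p l /\ p.1 = c)) => [[p [Hp E]]|Hn].
  case: p Hp E => p1 p2 Hp /= E; subst c.
  by exists p2; apply: PIso_dup.
pose K := foldr (fun q acc => maxn (q.2 : nat).+1 acc) 0 l.
have HK q : List.In q l -> (q.2 : nat) < K.
  rewrite /K; elim: (l) => [//|a s IH] /= [<-|Hq]; rewrite leq_max ?leqnn //.
  by rewrite IH ?orbT.
pose U y := pb (exists q, List.In q l /\ q.2 = y /\ rado_edge c q.1).
have [d [Kd Hd]] := rado_ext K U.
exists d; apply: PIso_cons => //; last by split=> /rado_irr.
move=> q Hq.
have qK := HK q Hq.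
have dq : d <> q.2 by move=> E; move: qK; rewrite -E ltnNge Kd.
have cq : c <> q.1 by move=> E; apply: Hn; exists q.
have key : rado_edge c q.1 <-> rado_edge d q.2.
  rewrite [rado_edge d _]rado_sym (Hd _ qK) pbP; split=> [h|[q' [Hq' [E h]]]]; first by exists q.
  have [[_ h2] _] := H q' q Hq' Hq.
  by rewrite -(h2 E).
split; first by split=> // E.
split=> //; rewrite rado_sym [rado_edge q.2 _]rado_sym; exact: key.
Qed.

Lemma tval_ord (L : signature) (T : structure L) n (a : 'I_n -> T) v (i : 'I_n) : Defs.tval a v i = a i.
Proof. by rewrite /Defs.tval (_ : insub (nat_of_ord i) = Some i) // valK. Qed.

Lemma tval_ge (L : signature) (T : structure L) n (a : 'I_n -> T) v k : n <= k -> Defs.tval a v k = v k.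
Proof. by move=> h; rewrite /Defs.tval insubN // -leqNgt. Qed.

Lemma pb_true (P : Prop) : P -> pb P = true.
Proof. by rewrite /pb; case: excluded_middle_informative. Qed.
Lemma pb_false (P : Prop) : ~ P -> pb P = false.
Proof. by rewrite /pb; case: excluded_middle_informative. Qed.
Lemma pb_eq (P Q : Prop) : pb P = pb Q -> (P <-> Q).
Proof.
case: (classic P) => [hP|hP]; case: (classic Q) => [hQ|hQ];
 rewrite ?(pb_true hP) ?(pb_false hP) ?(pb_true hQ) ?(pb_false hQ) //; tauto.
Qed.
Lemma pb_if (b : bool) (P : Prop) : (if b then P else ~ P) -> b = pb P.
Proof. by case: b => h; [rewrite pb_true|rewrite pb_false]. Qed.
Lemma if_pb (P : Prop) : if pb P then P else ~ P.
Proof. by rewrite /pb; case: excluded_middle_informative. Qed.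

Section Trace.
Variables (L : signature) (M : structure L) (O : structure binsig) (Rel : O -> O -> Prop).
Hypothesis HR : forall a : 'I_2 -> O, @rinterp binsig O tt a <-> Rel (a ord0) (a ord_max).
Hypothesis He : Ext Rel.
Variables (m : nat) (tau : O -> 'I_m -> M) (m0 : M).
Hypothesis Hinj : forall a b : O, (forall j, tau a j = tau b j) -> a = b.
Variable rho : formula L.
Hypothesis Hrho : forall x y (u : nat -> M), (forall j : 'I_m, u j = tau x j) ->
  (forall j : 'I_m, u (m + j) = tau y j) -> (sat u rho <-> Rel x y).

Definition lit (b : bool) (f : formula L) := if b then f else fneg f.
Lemma lit_ok (v : nat -> M) b f : sat v (lit b f) <-> (if b then sat v f else ~ sat v f).
Proof. by case: b. Qed.

Lemma lit_iff (v : nat -> M) b f (P : Prop) : (sat v f <-> P) ->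
  (sat v (lit b f) <-> (if b then P else ~ P)).
Proof. by case: b => /= ->. Qed.

Lemma trace_gen : @trace_defines_via L binsig M O m tau.
Proof.
split=> // n X [chi [v0 HX]].
pose I : finType := ('I_n * 'I_m)%type.
pose B := bnd chi.
pose va (a : 'I_n -> O) := Defs.tval (fun i : 'I_#|'I_n| => a (enum_val i)) v0.
pose posM (k j : nat) : nat :=
  match (insub k : option 'I_#|'I_n|) with
  | Some k' => match (insub j : option 'I_m) with
               | Some j' => nat_of_ord (enum_rank ((enum_val k', j') : I))
               | None => 0 end
  | None => #|I| + k * m + j end.
pose wv (t : nat) : M := if #|I| <= t then
     (match (insub ((t - #|I|) %% m) : option 'I_m) with
      | Some j => tau (v0 ((t - #|I|) %/ m)) j | None => m0 end) else m0.
pose Yval (y : I -> M) := Defs.tval (fun i : 'I_#|I| => y (enum_val i)) wv.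
have key a k (j : 'I_m) : Yval (fun p => tau (a p.1) p.2) (posM k j) = tau (va a k) j.
  case: (ltnP k #|'I_n|) => hk.
    have -> : k = nat_of_ord (Ordinal hk) by [].
    by rewrite /posM /Yval /va !valK /Defs.tval !valK /= enum_rankK.
  rewrite /posM; case: insubP => [k' /= hk1 _|_]; first by rewrite leqNgt hk1 in hk.
  rewrite /Yval /va (tval_ge _ _ hk).
  rewrite tval_ge; last by rewrite -addnA leq_addr.
  rewrite /wv -addnA leq_addr addKn.
  have hj := ltn_ord j.
  rewrite (_ : (k * m + j) %% m = j); last by rewrite modnMDl modn_small.
  rewrite (_ : (k * m + j) %/ m = k); last first.
    by rewrite divnMDl ?(leq_ltn_trans (leq0n j) hj) // divn_small // addn0.
  by rewrite valK.
pose EQf (k l : nat) := bigandf (enum 'I_m) (fun j => feq (tvar L (posM k j)) (tvar L (posM l j))).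
pose RELf (k l : nat) := subst (fun t => if t < m then posM k t else posM l (t - m)) rho.
have EQ_ok a k l : sat (Yval (fun p => tau (a p.1) p.2)) (EQf k l) <-> va a k = va a l.
  rewrite sat_bigandf; split=> [H|E].
    by apply: Hinj => j; rewrite -!key; apply: (H j); rewrite mem_enum.
  by move=> j _ /=; rewrite !key E.
have REL_ok a k l : sat (Yval (fun p => tau (a p.1) p.2)) (RELf k l) <-> Rel (va a k) (va a l).
  rewrite sat_subst; apply: Hrho => j /=; first by rewrite ltn_ord key.
  by rewrite ltnNge leq_addr /= addKn key.
pose typ (a : 'I_n -> O) : {ffun 'I_B * 'I_B -> bool * bool} :=
  [ffun p : 'I_B * 'I_B => (pb (va a p.1 = va a p.2), pb (Rel (va a p.1) (va a p.2)))].
pose TF (T : {ffun 'I_B * 'I_B -> bool * bool}) :=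
  bigandf (enum {: 'I_B * 'I_B}) (fun p : 'I_B * 'I_B => fand (lit (T p).1 (EQf p.1 p.2)) (lit (T p).2 (RELf p.1 p.2))).
have TF_ok a T : sat (Yval (fun p => tau (a p.1) p.2)) (TF T) <-> T = typ a.
  rewrite sat_bigandf; split=> [H|->] /=.
    apply/ffunP => p; have := H p; rewrite mem_enum => /(_ isT) /= [].
    rewrite (lit_iff _ (EQ_ok a _ _)) (lit_iff _ (REL_ok a _ _)) ffunE.
    move=> /pb_if <- /pb_if <-.
    by case: (T p).
  move=> p _; rewrite /= (lit_iff _ (EQ_ok a _ _)) (lit_iff _ (REL_ok a _ _)) !ffunE /=.
  split; exact: if_pb.
pose YF := bigorf (enum {: {ffun 'I_B * 'I_B -> bool * bool}})
  (fun T => if pb (exists a, X a /\ typ a = T) then TF T else fneg (ftrue L)).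
exists (fun y => sat (Yval y) YF); split; first by exists YF, wv.
move=> a; rewrite sat_bigorf; split=> [Xa|[T _]].
  exists (typ a); first by rewrite mem_enum.
  by rewrite pb_true; [apply/TF_ok | exists a].
case: (classic (exists a, X a /\ typ a = T)) => [[a' [Xa' Ea']]|hn]; last first.
  by rewrite (pb_false hn) /=; case.
rewrite pb_true; last by exists a'.
move/TF_ok => E; subst T.
move: Xa'; rewrite !HX.
suff HC : @Cond O Rel (va a') (va a) (bnd chi) by move=> h; apply/(pi_sat HR He HC).
move=> k l hk hl.
have := congr1 (fun f : {ffun 'I_B * 'I_B -> bool * bool} => f (Ordinal hk, Ordinal hl)) E; rewrite !ffunE /=.
move=> EE; have h1 := pb_eq (congr1 fst EE); have h2 := pb_eq (congr1 snd EE); split; [exact: h1|exact: h2].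
Qed.

End Trace.

Section Pull.
Variables (L : signature) (M : structure L) (O : structure binsig) (R : O -> O -> Prop).
Hypothesis HR : forall a : 'I_2 -> O, @rinterp binsig O tt a <-> R (a ord0) (a ord_max).
Variables (o0 : O) (m : nat) (tau : O -> 'I_m -> M).
Hypothesis Htr : @trace_defines_via L binsig M O m tau.

Lemma pull2 : exists (phi : formula L) (v' : nat -> M),
  forall x y, sat (pval (tau x) (tau y) v') phi <-> R x y.
Proof.
case: Htr => _ /(_ 2 (fun A => R (A ord0) (A ord_max))) [].
  exists (@Defs.frel binsig tt (fun c : 'I_2 => tvar binsig (enum_rank c))), (fun _ => o0).
  move=> A /=; rewrite HR /= /Defs.tval !valK /= !enum_rankK //.
move=> Y [[psi [vY HY]] HYX].
pose I : finType := ('I_2 * 'I_m)%type.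
pose sg (t : nat) : nat := match (insub t : option 'I_#|I|) with
   | Some t' => if (enum_val t').1 == ord0 then ((enum_val t').2 : nat) else m + (enum_val t').2
   | None => 2 * m + t end.
exists (subst sg psi), (fun t => vY (t - 2 * m)) => x y.
pose A (c : 'I_2) := if c == ord0 then x else y.
have -> : R x y <-> R (A ord0) (A ord_max) by [].
transitivity (Y (fun p => tau (A p.1) p.2)); last exact: iff_sym (HYX A).
rewrite HY sat_subst; apply: sat_ext => t _ /=.
rewrite /sg; case: insubP => [t' _ Et|ht] /=.
  rewrite -Et tval_ord.
  case: (enum_val t') => c l /=; rewrite /A /pval.
  case: eqP => _; first by rewrite tval_ord.
  rewrite tval_ge ?leq_addr // (_ : m + l - m = l) ?tval_ord //; lia.
rewrite tval_ge; last by rewrite leqNgt.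
rewrite /pval tval_ge; last by lia.
rewrite tval_ge; last by lia.
congr vY; lia.
Qed.

End Pull.

Lemma QLt_HR (a : 'I_2 -> QLt) : @rinterp binsig QLt tt a <-> (fun x y : rat => (x < y)%R) (a ord0) (a ord_max).
Proof. by []. Qed.

Lemma RG_HR (a : 'I_2 -> RandomGraph) : @rinterp binsig RandomGraph tt a <-> rado_edge (a ord0) (a ord_max).
Proof. by []. Qed.

Lemma trace_unstable (L : signature) (M : structure L) : trace_defines M QLt -> unstable M.
Proof.
case=> m [tau Htr].
have [phi [v' H]] := pull2 (O := QLt) (R := fun x y : rat => (x < y)%R) QLt_HR 0%R Htr.
exists phi, m, m => N; exists v', (fun i => tau ((i : nat)%:R : rat)%R), (fun j => tau ((j : nat)%:R : rat)%R).
by move=> i j; rewrite H /= ltr_nat.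
Qed.

Lemma trace_IP (L : signature) (M : structure L) : trace_defines M RandomGraph -> has_IP M.
Proof.
case=> m [tau Htr].
have [phi [v' H]] := pull2 (O := RandomGraph) (R := rado_edge) RG_HR (0 : RandomGraph) Htr.
exists phi, m, m => N.
pose U (S : {set 'I_N}) (x : nat) := [exists i in S, (i : nat) == x].
pose dS S := proj1_sig (constructive_indefinite_description _ (rado_ext N (U S))).
have HdS S : forall x, x < N -> (rado_edge x (dS S) <-> U S x).
  by rewrite /dS; case: constructive_indefinite_description => d [].
exists v', (fun i => tau (i : nat)), (fun S => tau (dS S)).
move=> i S; rewrite H /= HdS //; split.
  by case/existsP=> i' /andP [Hi /eqP E]; rewrite -(val_inj E).
by move=> Hi; apply/existsP; exists i; rewrite Hi eqxx.
Qed.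

Lemma tval_lt (L : signature) (T : structure L) n (a : 'I_n -> T) v v' k : k < n ->
  Defs.tval a v k = Defs.tval a v' k.
Proof. by move=> h; rewrite (_ : k = Ordinal h) // !tval_ord. Qed.

Section Build.
Variables (L : signature) (M : structure L).
Hypothesis Hsat : aleph1_saturated M.
Variables (phi : formula L) (p q : nat) (Idx : countType) (C : Idx -> Idx -> bool).
Hypothesis Hfin : forall F : seq Idx, exists (v : nat -> M) (a : Idx -> 'I_p -> M) (b : Idx -> 'I_q -> M),
  forall x y, x \in F -> y \in F -> (sat (pval (a x) (b y) v) phi <-> C x y).

Definition KK := maxn (bnd phi) (p + q).
Definition var (x : Idx) (j : nat) := if p + q <= j then j else KK + pickle x * KK + j.
Definition sxy x y t := if t < p then var x t else var y t.
Definition s0 t := if t < p then t else if t < p + q then KK + t else t.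

Definition tv (a b : 'I_KK -> M) (d : M) : nat -> M :=
  fun t => if t < KK then Defs.tval a (fun _ => d) t else Defs.tval b (fun _ => d) (t - KK).
Lemma tv_l a b d (j : 'I_KK) : tv a b d j = a j.
Proof. by rewrite /tv ltn_ord tval_ord. Qed.
Lemma tv_r a b d (j : 'I_KK) : tv a b d (KK + j) = b j.
Proof. by rewrite /tv ltnNge leq_addr /= addKn tval_ord. Qed.

Lemma build : exists (tau : Idx -> 'I_KK -> M) (w0 : M),
  forall x y (u : nat -> M), (forall j : 'I_KK, u j = tau x j) -> (forall j : 'I_KK, u (KK + j) = tau y j) ->
    (sat u (subst s0 phi) <-> C x y).
Proof.
have Kb : bnd phi <= KK by rewrite leq_max leqnn.
have Kpq : p + q <= KK by rewrite leq_max leqnn orbT.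
pose Sig (f : formula L) := exists x y, (f = subst (sxy x y) phi /\ C x y) \/ (f = fneg (subst (sxy x y) phi) /\ ~~ C x y).
pose mku (v : nat -> M) (a : Idx -> 'I_p -> M) (b : Idx -> 'I_q -> M) t :=
   if t < KK then v t else
    (let s := t - KK in match (unpickle (s %/ KK) : option Idx) with
      | Some z => if s %% KK < p then Defs.tval (a z) (fun _ => v 0) (s %% KK)
                  else Defs.tval (b z) (fun _ => v 0) (s %% KK - p)
      | None => v 0 end).
have key (v : nat -> M) (a : Idx -> 'I_p -> M) (b : Idx -> 'I_q -> M) x y :
  sat (mku v a b) (subst (sxy x y) phi) <-> sat (pval (a x) (b y) v) phi.
  pose u := mku v a b; rewrite sat_subst; apply: sat_ext => t tb /=.
  have tK : t < KK := leq_trans tb Kb.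
  have K0 : 0 < KK by case: (KK) tK.
  rewrite /sxy /var /pval.
  case: ltnP => tp.
    rewrite ifN; last by rewrite -ltnNge; apply: leq_trans (leq_addr _ _).
    rewrite /u /mku ltnNge -addnA leq_addr /= addKn divnMDl // divn_small // addn0 pickleK.
    by rewrite modnMDl modn_small // tp; apply: tval_lt.
  rewrite (tval_ge _ _ tp).
  case: ltnP => tpq.
    rewrite /u /mku ltnNge -addnA leq_addr /= addKn divnMDl // divn_small // addn0 pickleK.
    rewrite modnMDl modn_small // ltnNge tp /=; apply: tval_lt; lia.
  rewrite /u /mku tK tval_ge; last by lia.
  congr v; lia.
have [w Hw] : exists w : nat -> M, forall f, Sig f -> sat w f.
  apply: realize => // s Hs.
  have [F HF] : exists F : seq Idx, forall f, List.In f s -> exists x y, x \in F /\ y \in F /\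
      ((f = subst (sxy x y) phi /\ C x y) \/ (f = fneg (subst (sxy x y) phi) /\ ~~ C x y)).
    elim: s Hs => [|f s IH] Hs; first by exists [::].
    have [F HF] := IH (fun g h => Hs g (or_intror h)).
    have [x [y Hxy]] := Hs f (or_introl erefl).
    exists (x :: y :: F) => g [<-|/HF [x' [y' [hx [hy H]]]]].
      by exists x, y; rewrite !inE !eqxx ?orbT.
    by exists x', y'; rewrite !inE hx hy !orbT.
  have [v [a [b Hab]]] := Hfin F.
  exists (mku v a b) => f /HF [x [y [hx [hy [[-> Cxy]|[-> Cxy]]]]]].
    by rewrite key Hab.
  by rewrite /= key Hab // (negbTE Cxy).
have [v0 _] := Hfin [::].
exists (fun x (j : 'I_KK) => w (var x j)), (v0 0) => x y u Hx Hy.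
rewrite sat_subst.
have -> : sat (u \o s0) phi <-> sat w (subst (sxy x y) phi).
  rewrite sat_subst; apply: sat_ext => t tb /=.
  have tK : t < KK := leq_trans tb Kb.
  rewrite /s0 /sxy; case: ltnP => tp.
    by rewrite (_ : t = Ordinal tK) // Hx.
  case: ltnP => tpq.
    by rewrite (_ : t = Ordinal tK) // Hy.
  by rewrite (_ : t = Ordinal tK) // Hx /= /var !ifT.
case Cxy : (C x y).
  split=> // _; apply: Hw; exists x, y; by left.
split=> // h; have := Hw (fneg (subst (sxy x y) phi)); case; last by [].
by exists x, y; right; rewrite Cxy.
Qed.

End Build.

Lemma count_lt_sub (T : eqType) (a1 a2 : pred T) (s : seq T) z :
  subpred a1 a2 -> z \in s -> a2 z -> ~~ a1 z -> count a1 s < count a2 s.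
Proof.
move=> sub; elim: s => [//|r s IH]; rewrite inE => /orP [/eqP <-|zs] h2 h1 /=.
  rewrite h2 (negbTE h1) add0n add1n ltnS; exact: sub_count.
have := IH zs h2 h1; case: (boolP (a1 r)) => ha.
  by rewrite (sub _ ha) ltn_add2l.
by rewrite add0n => h; apply: leq_trans h _; rewrite leq_addl.
Qed.

Lemma rank_lt (F : seq rat) x y : x \in F -> y \in F ->
  (count (fun r => r < x)%R F < count (fun r => r < y)%R F) = (x < y)%R.
Proof.
move=> hx hy; case: (ltP x y) => xy.
  apply: (count_lt_sub (z := x)) => //; last by rewrite ltxx.
  by move=> r /= h; apply: lt_trans xy.
apply/negbTE; rewrite -leqNgt; apply: sub_count => r /= h.
exact: lt_le_trans xy.
Qed.

Section Inst.
Variables (L : signature) (M : structure L) (phi : formula L) (p q : nat).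

Lemma hfin_Q : (forall N : nat, exists (v : nat -> M) (a : 'I_N -> 'I_p -> M) (b : 'I_N -> 'I_q -> M),
      forall i j : 'I_N, sat (pval (a i) (b j) v) phi <-> (i < j)%N) ->
  forall F : seq rat, exists (v : nat -> M) (a : rat -> 'I_p -> M) (b : rat -> 'I_q -> M),
    forall x y, x \in F -> y \in F -> (sat (pval (a x) (b y) v) phi <-> (x < y)%R).
Proof.
move=> Hun F; have [v [a [b H]]] := Hun (size F).+1.
pose rk (x : rat) : 'I_(size F).+1 := inord (count (fun r => r < x)%R F).
exists v, (fun x => a (rk x)), (fun y => b (rk y)) => x y hx hy.
by rewrite H /rk !inordK ?ltnS ?count_size // rank_lt.
Qed.

Lemma hfin_N : (forall N : nat, exists (v : nat -> M) (a : 'I_N -> 'I_p -> M) (b : {set 'I_N} -> 'I_q -> M),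
      forall (i : 'I_N) (S : {set 'I_N}), sat (pval (a i) (b S) v) phi <-> i \in S) ->
  forall F : seq nat, exists (v : nat -> M) (a : nat -> 'I_p -> M) (b : nat -> 'I_q -> M),
    forall x y, x \in F -> y \in F -> (sat (pval (a x) (b y) v) phi <-> Nat.testbit y x).
Proof.
move=> Hip F; have [v [a [b H]]] := Hip (size F).+1.
exists v, (fun x => a (inord (index x F))), (fun y => b [set i : 'I_(size F).+1 | Nat.testbit y (nth 0 F i)]).
move=> x y hx hy; rewrite H inE inordK ?nth_index //.
by rewrite ltnS; apply: ltnW; rewrite index_mem.
Qed.

End Inst.

Lemma unstable_trace (L : signature) (M : structure L) :
  aleph1_saturated M -> unstable M -> trace_defines M QLt.
Proof.
move=> Hsat [phi [p [q Hun]]].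
have [tau [w0 Hp]] := build Hsat (C := fun x y : rat => (x < y)%R) (hfin_Q Hun).
exists (KK phi p q), tau.
apply: (@trace_gen L M QLt (fun x y : rat => (x < y)%R) QLt_HR ext_QLt _ tau w0 _ _ Hp).
move=> x y E.
have Et : tau x = tau y by apply: functional_extensionality.
have H z z' := Hp z z' (tv (tau z) (tau z') w0) (tv_l _ _ _) (tv_r _ _ _).
case: (ltgtP x y) => // h.
  have := H x y; rewrite Et h => -[_ /(_ isT)] /(proj1 (H y y)).
  by rewrite ltxx.
have := H y x; rewrite -Et h => -[_ /(_ isT)] /(proj1 (H x x)).
by rewrite ltxx.
Qed.

Lemma IP_trace (L : signature) (M : structure L) :
  aleph1_saturated M -> has_IP M -> trace_defines M RandomGraph.
Proof.
move=> Hsat [phi [p [q Hip]]].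
have [tau [w0 Hp]] := build Hsat (C := fun x y : nat => Nat.testbit y x) (hfin_N Hip).
set K := KK phi p q in tau Hp.
have H z z' := Hp z z' (tv (tau z) (tau z') w0) (tv_l _ _ _) (tv_r _ _ _).
have Hinj : forall x y : nat, (forall j, tau x j = tau y j) -> x = y.
  move=> x y E; have Et : tau x = tau y by apply: functional_extensionality.
  apply: Nat.bits_inj => z.
  have h1 := H z x; have h2 := H z y; rewrite Et in h1.
  case: (Nat.testbit x z) h1 => h1; case: (Nat.testbit y z) h2 => h2 //.
  - by have := proj1 h2 (proj2 h1 isT).
  - by have := proj1 h1 (proj2 h2 isT).
pose EQ := bigandf (enum 'I_K) (fun j => feq (tvar L j) (tvar L (K + j))).
pose rho0 := subst (s0 phi p q) phi.
pose sw t := if t < K then K + t else if t < K + K then t - K else t.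
exists K, tau.
apply: (@trace_gen L M RandomGraph rado_edge RG_HR ext_Rado _ tau w0 Hinj
   (fand (fneg EQ) (for_ rho0 (subst sw rho0)))).
move=> x y u Hx Hy.
have E1 : sat u rho0 <-> Nat.testbit y x := Hp x y u Hx Hy.
have E2 : sat u (subst sw rho0) <-> Nat.testbit x y.
  rewrite sat_subst; apply: Hp => j /=.
    by rewrite /sw ltn_ord Hy.
  by rewrite /sw ltnNge leq_addr /= ltn_add2l ltn_ord addKn Hx.
have E3 : sat u EQ <-> x = y.
  rewrite sat_bigandf; split=> [h|E j _ /=]; last by rewrite Hx Hy E.
  by apply: Hinj => j; rewrite -Hx -Hy; apply: (h j); rewrite mem_enum.
rewrite /= E1 E2 E3 /rado_edge.
by case: (Nat.testbit y x); case: (Nat.testbit x y); split; tauto.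
Qed.

Theorem proposition4p8 (L : signature) (M : structure L) :
  aleph1_saturated M ->
  (unstable M <-> trace_defines M QLt) /\
  (has_IP M <-> trace_defines M RandomGraph).
Proof.
move=> Hsat; split; split.
- exact: unstable_trace.
- exact: trace_unstable.
- exact: IP_trace.
- exact: trace_IP.
Qed.
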